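(* Let $F=\{T_1,\dots,T_n\}$ be a finite family of reduction operators relative to a well-ordered set $(G,<)$, let $\tilde F=\{\tilde T_1,\dots,\tilde T_n\}$ be the reduction of $F$, and let $C=\{C_2,\dots,C_n\}$ be the incremental completion of $\tilde F$. Then $F\cup C$ is a completion of $F$.
   Context: Let $\mathbb{K}$ be a field, $(G,<)$ a well-ordered set and $\mathbb{K}G$ the vector space with basis $G$. For $v\neq0$, $\mathrm{lt}(v)$ is the greatest element of $G$ appearing with nonzero coefficient in $v$. Extend $<$ to $\mathbb{K}G$: $u<v$ if $u=0$ and $v\neq0$, or if $\mathrm{lt}(u)<\mathrm{lt}(v)$; $u\le v$ means $u<v$ or $u=v$. A reduction operator is an idempotent linear endomorphism $T$ of $\mathbb{K}G$ with $T(g)\le g$ for all $g\in G$; $\mathrm{nf}(T)=\{g\in G\mid T(g)=g\}$, $\mathrm{red}(T)=G\setminus\mathrm{nf}(T)$. For every subspace $V$ there is a unique reduction operator $\ker^{-1}(V)$ with kernel $V$. $T\vee T'=\ker^{-1}(\ker T\cap\ker T')$. For a set $F$ of reduction operators, $\wedge F=\ker^{-1}(\sum_{T\in F}\ker T)$, $\mathrm{nf}(F)=\bigcap_{T\in F}\mathrm{nf}(T)$, $\mathrm{obs}(F)=\mathrm{nf}(F)\setminus\mathrm{nf}(\wedge F)$; $F$ is confluent if $\mathrm{obs}(F)=\emptyset$; a completion of $F$ is a confluent set $F'$ of reduction operators with $F\subseteq F'$ and $\wedge F'=\wedge F$. For a set $F$, $C^F=(\wedge F)\vee\ker^{-1}(\mathbb{K}\,\mathrm{nf}(F))$,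 where $\mathbb{K}\,\mathrm{nf}(F)$ is the subspace spanned by $\mathrm{nf}(F)$. Syzygies: $\mathbf{ker}(F)=\ker T_1\times\dots\times\ker T_n$, $\pi_F(v_1,\dots,v_n)=v_1+\dots+v_n$, $\mathrm{syz}(F)=\ker\pi_F$. For $g\in\mathrm{red}(T_i)$, $e_{i,g}$ is the tuple with $g-T_i(g)$ at position $i$ and $0$ elsewhere; these form a basis of $\mathbf{ker}(F)$, well-ordered by $e_{i,g}\sqsubset e_{i',g'}$ iff $i<i'$, or $i=i'$ and $g<g'$; $\mathrm{lt}(\mathrm{syz}(F))$ is the set of $\sqsubset$-greatest basis elements appearing in nonzero syzygies. The reduction of $F$ is $\tilde F=\{\tilde T_1,\dots,\tilde T_n\}$ where $\tilde T_i$ is the linear map with $\tilde T_i(g)=g$ if $g\in\mathrm{red}(T_i)$ and $e_{i,g}\in\mathrm{lt}(\mathrm{syz}(F))$, and $\tilde T_i(g)=T_i(g)$ otherwise. Incremental completion of a family $\{S_1,\dots,S_n\}$: set $F_1=\{S_1\}$ and for $2\le i\le n$, $C_i=C^{F_{i-1}\cup\{S_i\}}$ and $F_i=F_{i-1}\cup\{S_i,C_i\}$; the incremental completion is $\{C_2,\dots,C_n\}$. *)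

(* Defs.v *)
From HB Require Import structures.
From mathcomp Require Import all_boot all_order all_algebra.
From mathcomp Require Import finmap.
From mathcomp.multinomials Require Import monalg.
From Stdlib Require Import ClassicalEpsilon.

Set Implicit Arguments.
Unset Strict Implicit.
Unset Printing Implicit Defensive.

Import Order.TTheory GRing.Theory.
Local Open Scope ring_scope.

(* K a field, (G,<) a totally ordered set (well-foundedness is a hypothesis
   of the theorem); the vector space KG with basis G is {malg K[G]}
   (finitely supported functions G -> K), basis element g is << g >>. *)

Section ReductionOperators.
Variables (K : fieldType) (d : Order.disp_t) (G : orderType d).
Local Notation V := {malg K[G]}.
Local Notation Op := (V -> V).

Definition is_lt (v : V) (g : G) : Prop :=
  g \in msupp v /\ forall h, h \in msupp v -> (h <= g)%O.

Definition vlt (u v : V) : Prop :=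
  (u = 0 /\ v <> 0) \/
  exists a b, [/\ is_lt u a, is_lt v b & (a < b)%O].

Definition vle (u v : V) : Prop := vlt u v \/ u = v.

Definition is_red_op (T : Op) : Prop :=
  [/\ linear T, (forall v, T (T v) = T v) & forall g : G, vle (T << g >>) << g >>].

Definition nf (T : Op) (g : G) : Prop := T << g >> = << g >>.
Definition red (T : Op) (g : G) : Prop := ~ nf T g.

(* ker^{-1}(V): the (unique) reduction operator with kernel V *)
Definition ker_inv (P : V -> Prop) : Op :=
  epsilon (inhabits id) (fun T => is_red_op T /\ forall v, T v = 0 <-> P v).

Definition join (T T' : Op) : Op := ker_inv (fun v => T v = 0 /\ T' v = 0).

Fixpoint ksum (F : seq Op) (v : V) : Prop :=
  match F with
  | [::] => v = 0
  | T :: F' => exists w, T w = 0 /\ ksum F' (v - w)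
  end.

Definition wedge (F : seq Op) : Op := ker_inv (ksum F).

Definition nfF (F : seq Op) (g : G) : Prop := forall T, List.In T F -> nf T g.

Definition obs (F : seq Op) (g : G) : Prop := nfF F g /\ ~ nf (wedge F) g.

Definition confluent (F : seq Op) : Prop := forall g, ~ obs F g.

Definition is_completion (F F' : seq Op) : Prop :=
  [/\ confluent F', (forall T, List.In T F -> List.In T F') & wedge F' = wedge F].

Definition span (P : G -> Prop) (v : V) : Prop :=
  exists s : seq (K * G), (forall x, List.In x s -> P x.2) /\
                          v = \sum_(x <- s) x.1 *: << x.2 >>.

Definition CF (F : seq Op) : Op := join (wedge F) (ker_inv (span (nfF F))).

(* The family F = T_0,...,T_(n-1) is indexed from 0.
   A finite linear combination of basis elements e_{i,g} of ker(F) is a list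
   of ((i,g),c); its j-th component is sum of c (g - T_j g) over i = j. *)
Definition syz_comp (F : seq Op) (L : seq ((nat * G) * K)) (j : nat) : V :=
  \sum_(x <- L | x.1.1 == j) x.2 *: (<< x.1.2 >> - nth id F j << x.1.2 >>).

(* e_{i,g} [= e_{i',g'} (reflexive closure of the well-order on basis) *)
Definition sqle (p q : nat * G) : Prop :=
  (p.1 < q.1)%N \/ (p.1 = q.1 /\ (p.2 <= q.2)%O).

(* e_{i,g} \in lt(syz(F)) : e_{i,g} is the greatest basis element appearing
   (with nonzero coefficient) in some nonzero syzygy *)
Definition in_lt_syz (F : seq Op) (i : nat) (g : G) : Prop :=
  exists L : seq ((nat * G) * K),
  [/\ uniq (map fst L),
      (forall x, x \in L -> [/\ (x.1.1 < size F)%N, red (nth id F x.1.1) x.1.2 & x.2 != 0]),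
      \sum_(j < size F) syz_comp F L j = 0,
      (exists j, (j < size F)%N /\ syz_comp F L j <> 0) &
      (i, g) \in map fst L /\
      forall p, p \in map fst L -> sqle p (i, g)].

Definition lin_ext (f : G -> V) (v : V) : V := \sum_(g <- msupp v) v@_g *: f g.

Definition reduce_op (F : seq Op) (i : nat) : Op :=
  lin_ext (fun g => if excluded_middle_informative
                         (red (nth id F i) g /\ in_lt_syz F i g)
                    then << g >> else nth id F i << g >>).

Definition reduction (F : seq Op) : seq Op := mkseq (reduce_op F) (size F).

(* incremental completion: Fp = F_{i-1}, S = remaining S_i, ..., S_n *)
Fixpoint inc_aux (Fp : seq Op) (S : seq Op) : seq Op :=
  match S with
  | [::] => [::]
  | Si :: S' => let C := CF (rcons Fp Si) in C :: inc_aux (Fp ++ [:: Si; C]) S'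
  end.

Definition inc_completion (S : seq Op) : seq Op :=
  match S with
  | [::] => [::]
  | S1 :: S' => inc_aux [:: S1] S'
  end.

End ReductionOperators.

(* Main.v *)
Require Import Defs.
From HB Require Import structures.
From mathcomp Require Import all_boot all_order all_algebra.
From mathcomp Require Import finmap.
From mathcomp.multinomials Require Import monalg.
From Stdlib Require Import ClassicalEpsilon FunctionalExtensionality PropExtensionality.

Set Implicit Arguments.
Unset Strict Implicit.
Unset Printing Implicit Defensive.

Import Order.TTheory GRing.Theory.
Local Open Scope ring_scope.

Section Work.
Variables (K : fieldType) (d : Order.disp_t) (G : orderType d).
Local Notation V := {malg K[G]}.
Local Notation Op := (V -> V).
Local Notation is_red_op := (@is_red_op K d G).
Local Notation ksum := (@ksum K d G).
Local Notation wedge := (@wedge K d G).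
Local Notation CF := (@CF K d G).
Local Notation ker_inv := (@ker_inv K d G).
Local Notation reduction := (@reduction K d G).
Local Notation reduce_op := (@reduce_op K d G).
Local Notation inc_aux := (@inc_aux K d G).
Local Notation inc_completion := (@inc_completion K d G).
Local Notation nfF := (@nfF K d G).
Local Notation nf := (@nf K d G).
Local Notation span := (@Defs.span K d G).
Local Notation red := (@Defs.red K d G).

Lemma msuppU1' (k : G) : msupp (<< k >> : V) = [fset k]%fset.
Proof. by rewrite msuppU oner_eq0. Qed.

Lemma mcoeffU1' (k k' : G) : (<< k >> : V)@_k' = (k == k')%:R.
Proof. by rewrite mcoeffU. Qed.

Lemma in_msuppU1 (k h : G) : (h \in msupp (<< k >> : V)) = (h == k).
Proof. by rewrite msuppU1' in_fset1. Qed.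

Lemma malgU_scale (c : K) (k : G) : << c *g k >> = c *: (<< k >> : V).
Proof. by apply/malgP => h; rewrite mcoeffZ !mcoeffU mulr_natr. Qed.

Lemma malg_decomp (v : V) : v = \sum_(k <- msupp v) v@_k *: << k >>.
Proof.
rewrite {1}(monalgE v); apply: eq_bigr => k _; exact: malgU_scale.
Qed.

Lemma malg_decompw (v : V) (D : {fset G}) : (msupp v `<=` D)%fset ->
  v = \sum_(k <- D) v@_k *: << k >>.
Proof.
move=> sub; rewrite {1}(monalgEw sub); apply: eq_bigr => k _; exact: malgU_scale.
Qed.

Lemma mcoeff_sum (I : Type) (s : seq I) (P : pred I) (f : I -> V) h :
  (\sum_(i <- s | P i) f i)@_h = \sum_(i <- s | P i) (f i)@_h.
Proof. by apply: (big_morph (mcoeff h)) => [x y|]; rewrite ?mcoeffD ?mcoeff0. Qed.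

Lemma in_msuppD (u v : V) k : k \in msupp (u + v) -> (k \in msupp u) || (k \in msupp v).
Proof. by move=> H; have := fsubsetP (msuppD_le u v) k H; rewrite in_fsetU. Qed.

Lemma in_msuppB (u v : V) k : k \in msupp (u - v) -> (k \in msupp u) || (k \in msupp v).
Proof. by move=> H; have := fsubsetP (msuppB_le u v) k H; rewrite in_fsetU. Qed.

Lemma in_msuppZ (c : K) (u : V) k : k \in msupp (c *: u) -> k \in msupp u.
Proof. by move=> H; have := fsubsetP (msuppZ_le c u) k H. Qed.

Section Lin.
Variable T : Op.
Hypothesis HT : linear T.

Lemma lin0 : T 0 = 0.
Proof.
have H := HT 1 0 0; rewrite !scale1r addr0 in H.
by apply: (addrI (T 0)); rewrite addr0 -H.
Qed.

Lemma linD u v : T (u + v) = T u + T v.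
Proof. by have := HT 1 u v; rewrite !scale1r. Qed.

Lemma linZ a u : T (a *: u) = a *: T u.
Proof. by have := HT a u 0; rewrite !addr0 lin0 addr0. Qed.

Lemma linN u : T (- u) = - T u.
Proof. by rewrite -scaleN1r linZ scaleN1r. Qed.

Lemma linB u v : T (u - v) = T u - T v.
Proof. by rewrite linD linN. Qed.

Lemma lin_sum (I : Type) (s : seq I) (P : pred I) (f : I -> V) :
  T (\sum_(i <- s | P i) f i) = \sum_(i <- s | P i) T (f i).
Proof. by apply: (big_morph T linD lin0). Qed.

Lemma lin_coef v h :
  (T v)@_h = \sum_(k <- msupp v) v@_k * (T << k >>)@_h.
Proof.
rewrite {1}(malg_decomp v) lin_sum mcoeff_sum; apply: eq_bigr => k _.
by rewrite linZ mcoeffZ.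
Qed.
End Lin.


Definition pb (P : Prop) : bool := if excluded_middle_informative P then true else false.
Lemma pbP (P : Prop) : reflect P (pb P).
Proof. by rewrite /pb; case: excluded_middle_informative => H; constructor. Qed.

Lemma max_seq0 (s : seq G) : s != [::] ->
  exists2 x, x \in s & forall y, y \in s -> (y <= x)%O.
Proof.
elim: s => [|a s IH] // _.
case: s IH => [|b s] IH.
  by exists a; rewrite ?inE // => y; rewrite inE => /eqP ->.
have [x xs Hx] := IH isT.
have [le|lt] := leP a x.
  exists x; first by rewrite inE xs orbT.
  by move=> y; rewrite inE => /orP [/eqP ->|ys] //; exact: Hx.
exists a; first by rewrite inE eqxx.
move=> y; rewrite inE => /orP [/eqP ->|ys] //.
by apply: le_trans (Hx y ys) (ltW lt).
Qed.

Lemma max_seq (s : seq G) (P : pred G) : has P s ->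
  exists2 x, x \in s & P x /\ forall y, y \in s -> P y -> (y <= x)%O.
Proof.
move=> hP.
have : filter P s != [::] by rewrite -size_eq0 size_filter -lt0n -has_count.
move=> /max_seq0 [x]; rewrite mem_filter => /andP [Px xs] Hx.
exists x => //; split=> // y ys Py; apply: Hx; by rewrite mem_filter Py ys.
Qed.

Lemma lt_exists (v : V) : v != 0 -> exists g, is_lt v g.
Proof.
move=> nz.
have : (msupp v : seq G) != [::].
  apply/eqP => E; move: nz; rewrite (malg_decomp v) E big_nil eqxx //.
move=> /max_seq0 [x xs Hx]; exists x; split=> //.
Qed.

Lemma is_ltU (g b : G) : is_lt (<< g >> : V) b -> b = g.
Proof. by case; rewrite in_msuppU1 => /eqP. Qed.

Lemma is_ltU' (g : G) : is_lt (<< g >> : V) g.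
Proof. by split; rewrite ?in_msuppU1 // => h; rewrite in_msuppU1 => /eqP ->. Qed.

Lemma is_lt_neq0 (v : V) g : is_lt v g -> v@_g != 0.
Proof. by case; rewrite mcoeff_neq0. Qed.

Lemma msupp0' (h : G) : h \in msupp (0 : V) = false.
Proof. by rewrite msupp0 in_fset0. Qed.


Section RedOp.
Variable T : Op.
Hypothesis HT : is_red_op T.

Let Tlin : linear T. Proof. by case: HT. Qed.
Let Tidem v : T (T v) = T v. Proof. by case: HT. Qed.
Let Tle g : vle (T << g >>) << g >>. Proof. by case: HT. Qed.

Lemma red_lt g : ~ nf T g -> forall h, h \in msupp (T << g >>) -> (h < g)%O.
Proof.
move=> ng h hs; case: (Tle g) => [[[E _]|[a [b [la lb ab]]]]|E] //.
- by move: hs; rewrite E msupp0'.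
- by move: lb => /is_ltU Eb; subst b; case: la => _ /(_ h hs) ha; apply: le_lt_trans ha ab.
Qed.

Lemma supp_le g h : h \in msupp (T << g >>) -> (h <= g)%O.
Proof.
move=> hs; have [ng|ng] := pbP (nf T g).
  by move: hs; rewrite ng in_msuppU1 => /eqP ->.
exact/ltW/(red_lt ng).
Qed.

Lemma coef_gt g h : (g < h)%O -> (T << g >>)@_h = 0.
Proof.
move=> gh; apply/eqP; rewrite mcoeff_eq0; apply/negP => /supp_le.
by rewrite leNgt gh.
Qed.

Lemma red_coef_self g : ~ nf T g -> (T << g >>)@_g = 0.
Proof. by move=> ng; apply/eqP; rewrite mcoeff_eq0; apply/negP => /(red_lt ng); rewrite ltxx. Qed.

Lemma red_kernel g : ~ nf T g ->
  T (<< g >> - T << g >>) = 0 /\ is_lt (<< g >> - T << g >>) g.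
Proof.
move=> ng; split; first by rewrite linB // Tidem subrr.
split.
  by rewrite -mcoeff_neq0 mcoeffB red_coef_self // subr0 mcoeffU1' eqxx oner_eq0.
move=> h /in_msuppB /orP [|hs]; first by rewrite in_msuppU1 => /eqP ->.
exact/ltW/(red_lt ng).
Qed.

Lemma nf_notlt g v : nf T g -> T v = 0 -> ~ is_lt v g.
Proof.
move=> ng Tv [gs Hv].
have : (T v)@_g = v@_g.
  rewrite lin_coef // (big_fsetD1 g) //= ng mcoeffU1' eqxx mulr1 big1_fset ?addr0 //.
  move=> k; rewrite in_fsetD1 => /andP [kg ks] _.
  rewrite coef_gt ?mulr0 // lt_neqAle kg Hv //.
by rewrite Tv mcoeff0 => /esym/eqP; rewrite mcoeff_eq0 gs.
Qed.

Lemma fix_supp u : T u = u -> forall h, h \in msupp u -> nf T h.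
Proof.
move=> Tu h hs; apply: NNPP => nh.
have [m ms [/pbP nm Hm]] := @max_seq (msupp u) (fun h => ~~ pb (nf T h))
   (introT hasP (ex_intro2 _ _ h hs (introN (pbP _) nh))).
have : (T u)@_m = 0.
  rewrite lin_coef // big1_fset // => k ks _.
  have [E|ne] := eqVneq k m; first by subst k; rewrite red_coef_self ?mulr0 //; apply/negP.
  have [nk|nk] := pbP (nf T k).
    by rewrite nk mcoeffU1' (negbTE ne) mulr0.
  rewrite coef_gt ?mulr0 // lt_neqAle ne Hm //; exact/pbP.
by rewrite Tu => /eqP; rewrite mcoeff_eq0 ms.
Qed.

End RedOp.


Definition subspace (P : V -> Prop) := P 0 /\ forall a u v, P u -> P v -> P (a *: u + v).
Definition LT (P : V -> Prop) (g : G) := exists v, P v /\ is_lt v g.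

Section Subspace.
Variable P : V -> Prop.
Hypothesis HP : subspace P.
Lemma sub0 : P 0. Proof. by case: HP. Qed.
Lemma subD u v : P u -> P v -> P (u + v).
Proof. by case: HP => _ H Pu Pv; have := H 1 u v Pu Pv; rewrite scale1r. Qed.
Lemma subZ a u : P u -> P (a *: u).
Proof. by case: HP => H0 H Pu; have := H a u 0 Pu H0; rewrite addr0. Qed.
Lemma subN u : P u -> P (- u).
Proof. by move=> Pu; rewrite -scaleN1r; apply: subZ. Qed.
Lemma subB u v : P u -> P v -> P (u - v).
Proof. by move=> Pu Pv; apply: subD => //; apply: subN. Qed.
Lemma sub_sum (I : Type) (s : seq I) (Q : pred I) (f : I -> V) :
  (forall i, Q i -> P (f i)) -> P (\sum_(i <- s | Q i) f i).
Proof. by move=> H; apply: (big_ind P); [exact: sub0|exact: subD|]. Qed.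
End Subspace.

Section Existence.
Hypothesis wfG : well_founded (fun x y : G => (x < y)%O).
Variable P : V -> Prop.
Hypothesis HP : subspace P.

Definition espec (v w : V) :=
  [/\ P (v - w), (forall k, k \in msupp w -> ~ LT P k) &
      (forall k, k \in msupp w -> exists2 k', k' \in msupp v & (k <= k')%O)].

Lemma espec0 : espec 0 0.
Proof. by split; [rewrite subrr; exact: (sub0 HP)| |] => k; rewrite msupp0'. Qed.

Lemma exist_spec v : exists w, espec v w.
Proof.
have Q : forall g v, (forall k, k \in msupp v -> (k <= g)%O) -> exists w, espec v w.
  elim/(well_founded_induction wfG) => g IH {}v Hv.
  have aux : forall v', (forall k, k \in msupp v' -> (k < g)%O) -> exists w, espec v' w.
    move=> v' Hv'; have [->|nz] := eqVneq v' 0; first by exists 0; exact: espec0.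
    have [m [ms Hm]] := lt_exists nz; exact: IH m (Hv' m ms) v' Hm.
  have [c0|cn] := eqVneq (v@_g) 0.
    apply: aux => k ks; rewrite lt_neqAle Hv // andbT; apply/eqP => E; subst k.
    by move: ks; rewrite -mcoeff_neq0 c0 eqxx.
  have gs : g \in msupp v by rewrite -mcoeff_neq0.
  case: (classic (LT P g)) => [[p [Pp lp]]|nl].
  - have pn := is_lt_neq0 lp; case: lp => gp Hp.
    pose c := v@_g / p@_g.
    pose v' := v - c *: p.
    have Hv' : forall k, k \in msupp v' -> (k < g)%O.
      move=> k ks; rewrite lt_neqAle; apply/andP; split.
        apply/eqP => E; subst k; move: ks; rewrite -mcoeff_neq0 mcoeffB mcoeffZ.
        by rewrite /c divfK // subrr eqxx.
      by move: ks => /in_msuppB /orP [/Hv|/in_msuppZ /Hp].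
    have [w' [Pw' Nw' Dw']] := aux v' Hv'.
    exists w'; split=> //.
      have -> : v - w' = c *: p + (v' - w') by rewrite /v' addrCA addrA subrK.
      by case: HP => _ H; apply: H.
    move=> k /Dw' [k' k's kk']; exists g => //.
    exact: le_trans kk' (ltW (Hv' k' k's)).
  - pose v' := v - v@_g *: << g >>.
    have Hv' : forall k, k \in msupp v' -> (k < g)%O.
      move=> k ks; rewrite lt_neqAle; apply/andP; split.
        apply/eqP => E; subst k; move: ks; rewrite -mcoeff_neq0 mcoeffB mcoeffZ.
        by rewrite mcoeffU1' eqxx mulr1 subrr eqxx.
      by move: ks => /in_msuppB /orP [/Hv|/in_msuppZ]; rewrite ?in_msuppU1 => // /eqP ->.
    have [w' [Pw' Nw' Dw']] := aux v' Hv'.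
    exists (w' + v@_g *: << g >>); split.
    + have -> : v - (w' + v@_g *: << g >>) = v' - w' by rewrite /v' opprD addrA addrAC.
      done.
    + move=> k /in_msuppD /orP [/Nw' //|/in_msuppZ]; by rewrite in_msuppU1 => /eqP ->.
    + move=> k /in_msuppD /orP [/Dw' [k' k's kk']|/in_msuppZ H]; exists g => //.
        exact: le_trans kk' (ltW (Hv' k' k's)).
      by move: H; rewrite in_msuppU1 => /eqP ->.
have [->|nz] := eqVneq v 0; first by exists 0; exact: espec0.
have [m [ms Hm]] := lt_exists nz; exact: Q m v Hm.
Qed.

Lemma espec_uniq v w1 w2 : espec v w1 -> P (v - w2) ->
  (forall k, k \in msupp w2 -> ~ LT P k) -> w1 = w2.
Proof.
case=> Pw1 N1 _ Pw2 N2; apply/eqP; rewrite -subr_eq0; apply/negP => /negP nz.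
have [g lg] := lt_exists nz.
have Pd : P (w1 - w2).
  have -> : w1 - w2 = (v - w2) - (v - w1).
    by rewrite opprB [RHS]addrC addrA subrK.
  exact: (subB HP).
have := lg; case => /in_msuppB /orP [/N1|/N2] H _; apply: H; by exists (w1 - w2).
Qed.

Lemma ker_inv_exists : exists T, is_red_op T /\ forall v, T v = 0 <-> P v.
Proof.
pose T := fun v => epsilon (inhabits 0) (espec v).
have TS v : espec v (T v) by apply: epsilon_spec; exact: exist_spec.
have TU v w : P (v - w) -> (forall k, k \in msupp w -> ~ LT P k) -> T v = w.
  by apply: espec_uniq.
exists T; split; last first.
  move=> v; split=> [Tv|Pv].
    by have [] := TS v; rewrite Tv subr0.
  by apply: TU; rewrite ?subr0 // => k; rewrite msupp0'.
split.
- move=> a u v; apply: TU.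
  + have -> : a *: u + v - (a *: T u + T v) = a *: (u - T u) + (v - T v).
      by rewrite scalerBr opprD addrACA.
    by case: HP => _ H; apply: H; [case: (TS u)|case: (TS v)].
  + move=> k /in_msuppD /orP [/in_msuppZ|]; by [case: (TS u) => _ H _; apply: H | case: (TS v) => _ H _; apply: H].
- move=> v; apply: TU; first by rewrite subrr; exact: (sub0 HP).
  by case: (TS v).
- move=> g; case: (classic (LT P g)) => [lg|nl]; last first.
    right; apply: TU; first by rewrite subrr; exact: (sub0 HP).
    by move=> k; rewrite in_msuppU1 => /eqP ->.
  have Hk : forall k, k \in msupp (T << g >>) -> (k < g)%O.
    move=> k ks; case: (TS << g >>) => _ N D.
    have [k' ] := D k ks; rewrite in_msuppU1 => /eqP -> kg.
    rewrite lt_neqAle kg andbT; apply/eqP => E; subst k; exact: N g ks lg.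
  left; have [E|nz] := eqVneq (T << g >>) 0.
    left; split => //; apply/eqP; by rewrite monalgU_eq0 oner_eq0.
  right; have [a la] := lt_exists nz; exists a, g; split=> //; first exact: is_ltU'.
  by case: la => /Hk.
Qed.

Lemma ker_invP : is_red_op (ker_inv P) /\ forall v, ker_inv P v = 0 <-> P v.
Proof.
exact: (epsilon_spec (inhabits (@id V)) (fun T : Op => is_red_op T /\ forall v, T v = 0 <-> P v) ker_inv_exists).
Qed.

End Existence.


Lemma In_mem (T : eqType) (x : T) (s : seq T) : List.In x s <-> x \in s.
Proof.
elim: s => [|a s IH] //=; rewrite inE; split.
  by case=> [->|/IH ->]; rewrite ?eqxx ?orbT.
by case/orP => [/eqP ->|/IH]; [left|right].
Qed.

Definition allred (X : seq Op) := forall T, List.In T X -> is_red_op T.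
Definition conf (X : seq Op) := forall g, nfF X g -> ~ LT (ksum X) g.

Lemma red_lin (T : Op) : is_red_op T -> linear T. Proof. by case. Qed.
Lemma red_idem (T : Op) : is_red_op T -> forall v, T (T v) = T v. Proof. by case. Qed.

Lemma kernel_subspace (T : Op) : linear T -> subspace (fun v => T v = 0).
Proof.
move=> HT; split; first exact: lin0.
by move=> a u v Tu Tv; rewrite HT Tu Tv scaler0 addr0.
Qed.

Lemma ksum_subspace X : allred X -> subspace (ksum X).
Proof.
elim: X => [|T X IH] AX /=.
  by split=> // a u v -> ->; rewrite scaler0 addr0.
have HT : linear T by apply: red_lin; apply: AX; left.
have IH' : subspace (ksum X) by apply: IH => T' H; apply: AX; right.
split.
  by exists 0; rewrite lin0 // subrr; split=> //; case: IH'.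
move=> a u v [wu [Tu Xu]] [wv [Tv Xv]]; exists (a *: wu + wv); split.
  by rewrite HT Tu Tv scaler0 addr0.
have -> : a *: u + v - (a *: wu + wv) = a *: (u - wu) + (v - wv).
  by rewrite scalerBr opprD addrACA.
by case: IH' => _; apply.
Qed.

Lemma ksum_sub X (Q : V -> Prop) : subspace Q ->
  (forall T, List.In T X -> forall w, T w = 0 -> Q w) -> forall v, ksum X v -> Q v.
Proof.
move=> HQ; elim: X => [|T X IH] H v /=; first by move=> ->; exact: sub0 HQ.
move=> [w [Tw Xw]].
have Qw : Q w by apply: (H T) => //; left.
have Qr : Q (v - w) by apply: IH => // T' HT'; apply: H; right.
by have := subD HQ Qw Qr; rewrite addrC subrK.
Qed.

Lemma ksum_in X (T : Op) (w : V) : allred X -> List.In T X -> T w = 0 -> ksum X w.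
Proof.
elim: X => [|T' X IH] AX //= [E|HT] Tw.
  subst T'; exists w; split=> //; rewrite subrr.
  by case: (ksum_subspace (fun T H => AX T (or_intror H))).
exists 0; split; first by apply: lin0; apply: red_lin; apply: AX; left.
by rewrite subr0; apply: IH => // T0 H; apply: AX; right.
Qed.

Lemma ksum_mono A B (v : V) : allred B -> (forall T, List.In T A -> List.In T B) ->
  ksum A v -> ksum B v.
Proof.
move=> AB sub; apply: ksum_sub; first exact: ksum_subspace.
move=> T HT w Tw; apply: ksum_in AB (sub T HT) Tw.
Qed.

Lemma LT_mono (P Q : V -> Prop) g : (forall v, P v -> Q v) -> LT P g -> LT Q g.
Proof. by move=> H [v [Pv lv]]; exists v; split=> //; apply: H. Qed.

Lemma nfF_mono A B g : (forall T, List.In T A -> List.In T B) -> nfF B g -> nfF A g.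
Proof. by move=> H nB T HT; apply: nB; apply: H. Qed.

Lemma span_subspace (Q : G -> Prop) : subspace (span Q).
Proof.
split; first by exists [::]; split=> //; rewrite big_nil.
move=> a u v [su [Hu ->]] [sv [Hv ->]].
exists ([seq (a * x.1, x.2) | x <- su] ++ sv); split.
  move=> x /List.in_app_iff [/List.in_map_iff [y [<- Hy]]|Hx] /=; [exact: Hu|exact: Hv].
rewrite big_cat big_map /= scaler_sumr; congr (_ + _); apply: eq_bigr => x _.
by rewrite scalerA.
Qed.

Lemma span_supp (Q : G -> Prop) v : (forall k, k \in msupp v -> Q k) -> span Q v.
Proof.
move=> H; exists [seq (v@_k, k) | k <- msupp v]; split.
  by move=> x /List.in_map_iff [k [<- Hk]] /=; apply: H; apply/In_mem.
by rewrite big_map /=; exact: malg_decomp.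
Qed.


Section Families.
Hypothesis wfG : well_founded (fun x y : G => (x < y)%O).

Lemma wedgeP X : allred X -> is_red_op (wedge X) /\ forall v, wedge X v = 0 <-> ksum X v.
Proof. by move=> AX; apply: ker_invP => //; apply: ksum_subspace. Qed.

Lemma spanP Q : is_red_op (ker_inv (span Q)) /\ forall v, ker_inv (span Q) v = 0 <-> span Q v.
Proof. by apply: ker_invP => //; apply: span_subspace. Qed.

Lemma CFP X : allred X ->
  is_red_op (CF X) /\ forall v, CF X v = 0 <-> ksum X v /\ span (nfF X) v.
Proof.
move=> AX; have [WR WK] := wedgeP AX; have [SR SK] := spanP (nfF X).
have sub : subspace (fun v => wedge X v = 0 /\ ker_inv (span (nfF X)) v = 0).
  split; first by rewrite !lin0 //; apply: red_lin.
  move=> a u v [W1 S1] [W2 S2]; rewrite !(red_lin WR) !(red_lin SR).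
  by rewrite W1 W2 S1 S2 scaler0 addr0.
have [CR CK] := ker_invP wfG sub; split=> // v.
rewrite /CF /join CK; split=> [[/WK ? /SK ?]|[/WK ? /SK ?]] //.
Qed.

Lemma nf_of_notLT (T : Op) (P : V -> Prop) g : is_red_op T ->
  (forall v, T v = 0 <-> P v) -> ~ LT P g -> nf T g.
Proof.
move=> TR TK nl; apply: NNPP => rT; apply: nl.
have [Tu lu] := red_kernel TR rT; exists (<< g >> - T << g >>); split=> //; exact/TK.
Qed.

Lemma key_conf X g : allred X -> nfF X g -> nf (CF X) g -> ~ LT (ksum X) g.
Proof.
move=> AX nX nC [v [Pv lv]].
have [WR WK] := wedgeP AX.
have rW : ~ nf (wedge X) g := fun nW => nf_notlt WR nW ((WK v).2 Pv) lv.
have [Wu lu] := red_kernel WR rW.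
have [CR CK] := CFP AX.
apply: (nf_notlt CR nC _ lu); apply/CK; split; first exact/WK.
apply: span_supp => k /in_msuppB /orP [|ks]; first by rewrite in_msuppU1 => /eqP ->.
have nWk : nf (wedge X) k := fix_supp WR (red_idem WR _) ks.
move=> T0 HT0; apply: NNPP => rT.
have [T0u lu'] := red_kernel (AX T0 HT0) rT.
apply: (nf_notlt WR nWk _ lu'); apply/WK; exact: ksum_in AX HT0 T0u.
Qed.

Lemma inc_main S' : forall Fp, allred Fp -> allred S' -> conf Fp ->
  [/\ allred (inc_aux Fp S'),
      (forall C, List.In C (inc_aux Fp S') -> forall w, C w = 0 -> ksum (Fp ++ S') w) &
      (forall g, nfF (Fp ++ S' ++ inc_aux Fp S') g -> ~ LT (ksum (Fp ++ S')) g)].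
Proof.
elim: S' => [|Si S'' IH] Fp AF AS CFp /=.
  split=> // g; rewrite !cats0; exact: CFp.
set X := rcons Fp Si.
set C := CF X.
have AX : allred X.
  by move=> T; rewrite /X -cats1 List.in_app_iff /= => [[/AF|[<-|//]]] //; apply: AS; left.
have [CR CK] := CFP AX.
set Fp' := Fp ++ [:: Si; C].
have AF' : allred Fp'.
  move=> T; rewrite List.in_app_iff /= => [[/AF|[<-|[<-|//]]]] //; by [apply: AS; left|].
have AS'' : allred S'' by move=> T H; apply: AS; right.
have AB : allred (Fp ++ Si :: S'').
  by move=> T; rewrite List.in_app_iff => [[/AF|/AS]].
have kerC : forall w, C w = 0 -> ksum (Fp ++ Si :: S'') w.
  move=> w /CK [Xw _]; apply: (ksum_mono AB) Xw => T.
  rewrite /X -cats1 !List.in_app_iff /=; tauto.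
have subF' : forall w, ksum Fp' w -> ksum X w.
  apply: ksum_sub; first exact: ksum_subspace.
  move=> T; rewrite List.in_app_iff /= => [[HT|[<-|[<-|//]]]] w Tw.
  - by apply: ksum_in AX _ Tw; rewrite /X -cats1 List.in_app_iff; left.
  - by apply: ksum_in AX _ Tw; rewrite /X -cats1 List.in_app_iff; right; left.
  - by case/CK: Tw.
have CFp' : conf Fp'.
  move=> g nF' /(LT_mono subF'); apply: key_conf => //.
    by apply: nfF_mono nF' => T; rewrite /X -cats1 !List.in_app_iff /=; tauto.
  by apply: nF'; rewrite List.in_app_iff /=; tauto.
have [AI KI CI] := IH Fp' AF' AS'' CFp'.
have sub1 : forall w, ksum (Fp' ++ S'') w -> ksum (Fp ++ Si :: S'') w.
  apply: ksum_sub; first exact: ksum_subspace.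
  move=> T; rewrite /Fp' -catA !List.in_app_iff /= => H w Tw.
  have [E|H'] : C = T \/ List.In T (Fp ++ Si :: S'').
    by rewrite List.in_app_iff /=; tauto.
  - by subst T; apply: kerC.
  - exact: ksum_in AB H' Tw.
split.
- move=> T /= [<-|/AI] //.
- move=> T /= [<-|HT] w Tw; first exact: kerC.
  exact/sub1/(KI T HT w Tw).
- have AB' : allred (Fp' ++ S'') by move=> T; rewrite List.in_app_iff => [[/AF'|/AS'']].
  have sub2 : forall T, List.In T (Fp ++ Si :: S'') -> List.In T (Fp' ++ S'').
    by move=> T; rewrite /Fp' !List.in_app_iff /=; tauto.
  move=> g nF /(LT_mono (fun v H => ksum_mono AB' sub2 H)); apply: CI.
  by apply: nfF_mono nF => T; rewrite /Fp' !List.in_app_iff /= !List.in_app_iff /=; tauto.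
Qed.

End Families.


Section LinExt.
Variable f : G -> V.
Local Notation lin_ext := (@lin_ext K d G).

Lemma lin_ext_w v (D : {fset G}) : (msupp v `<=` D)%fset ->
  lin_ext f v = \sum_(k <- D) v@_k *: f k.
Proof.
move=> sub; rewrite /lin_ext (big_fset_incl _ sub) // => k _ /mcoeff_outdom ->.
by rewrite scale0r.
Qed.

Lemma lin_ext_lin : linear (lin_ext f).
Proof.
move=> a u v.
pose D := (msupp u `|` msupp v)%fset.
have sD : (msupp (a *: u + v) `<=` D)%fset.
  apply/fsubsetP => k /in_msuppD /orP [/in_msuppZ|] H; by rewrite in_fsetU H ?orbT.
have su : (msupp u `<=` D)%fset by apply/fsubsetP => k H; rewrite in_fsetU H.
have sv : (msupp v `<=` D)%fset by apply/fsubsetP => k H; rewrite in_fsetU H orbT.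
rewrite (lin_ext_w sD) (lin_ext_w su) (lin_ext_w sv) scaler_sumr -big_split /=.
apply: eq_bigr => k _; by rewrite mcoeffD mcoeffZ scalerDl scalerA.
Qed.

Lemma lin_ext_U g : lin_ext f << g >> = f g.
Proof. by rewrite /lin_ext msuppU1' big_seq_fset1 mcoeffU1' eqxx scale1r. Qed.

Lemma lin_ext_id u : (forall h, h \in msupp u -> f h = << h >>) -> lin_ext f u = u.
Proof.
move=> H; rewrite {2}(malg_decomp u) /lin_ext; apply: eq_big_seq => k ks.
by rewrite H.
Qed.
End LinExt.

Lemma In_nth' (T : Op) (s : seq Op) : List.In T s -> exists i, (i < size s)%N /\ T = nth id s i.
Proof.
elim: s => [|a s IH] //= [->|/IH [i [lt ->]]]; first by exists 0%N.
by exists i.+1.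
Qed.

Lemma nth_In' (s : seq Op) i : (i < size s)%N -> List.In (nth id s i) s.
Proof.
elim: s i => [|a s IH] [|i] //= lt; first by left.
by right; apply: IH.
Qed.

Section Reduction.
Hypothesis wfG : well_founded (fun x y : G => (x < y)%O).
Variable F : seq Op.
Hypothesis HF : allred F.

Local Notation T_ i := (nth id F i).
Definition fred i (g : G) : V :=
  if excluded_middle_informative (red (T_ i) g /\ in_lt_syz F i g)
  then << g >> else T_ i << g >>.

Lemma reduce_opE i : reduce_op F i = lin_ext (fred i).
Proof. by []. Qed.

Lemma In_reduction T : List.In T (reduction F) <-> exists i, (i < size F)%N /\ T = reduce_op F i.
Proof.
rewrite /reduction /mkseq List.in_map_iff; split.
  by move=> [i [<- /In_mem]]; rewrite mem_iota add0n => H; exists i.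
by move=> [i [lt ->]]; exists i; split=> //; apply/In_mem; rewrite mem_iota.
Qed.

Lemma TiR i : (i < size F)%N -> is_red_op (T_ i).
Proof. by move=> lt; apply: HF; apply: nth_In'. Qed.

Lemma fred_cases i g : fred i g = << g >> \/ fred i g = T_ i << g >>.
Proof. by rewrite /fred; case: excluded_middle_informative; [left|right]. Qed.

Lemma fred_nf i g : nf (T_ i) g -> fred i g = << g >>.
Proof. by rewrite /fred => ng; case: excluded_middle_informative => // _; exact: ng. Qed.

Lemma fred_nsyz i g : ~ in_lt_syz F i g -> fred i g = T_ i << g >>.
Proof.
rewrite /fred => ns; case: excluded_middle_informative => // H.
by exfalso; apply: ns; case: H.
Qed.

Lemma reduce_red i : (i < size F)%N -> is_red_op (reduce_op F i).
Proof.
move=> lt; have TR := TiR lt; rewrite reduce_opE.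
have L := lin_ext_lin (fred i).
have fix_f : forall k, lin_ext (fred i) (fred i k) = fred i k.
  move=> k; case: (fred_cases i k) => E; rewrite E; first by rewrite lin_ext_U E.
  apply: lin_ext_id => h hs; apply: fred_nf.
  have := @fix_supp _ TR (T_ i << k >>) (red_idem TR _) h hs. exact.
split=> //.
- move=> v; have -> : lin_ext (fred i) v = \sum_(k <- msupp v) v@_k *: fred i k by [].
  by rewrite lin_sum //; apply: eq_bigr => k _; rewrite linZ // fix_f.
- move=> g; rewrite lin_ext_U; case: (fred_cases i g) => ->; first by right.
  by case: TR.
Qed.

Lemma reduce_nf i g : nf (T_ i) g -> nf (reduce_op F i) g.
Proof. by move=> ng; rewrite /nf reduce_opE lin_ext_U fred_nf. Qed.

Lemma reduce_ker i v : (i < size F)%N -> reduce_op F i v = 0 -> T_ i v = 0.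
Proof.
move=> lt; have TR := TiR lt; have TL := red_lin TR.
rewrite reduce_opE => E.
have -> : v = \sum_(k <- msupp v) v@_k *: (<< k >> - fred i k).
  transitivity (v - lin_ext (fred i) v); first by rewrite E subr0.
  rewrite {1}(malg_decomp v) /lin_ext -sumrB.
  by apply: eq_bigr => k _; rewrite scalerBr.
rewrite lin_sum //; apply: big1 => k _; rewrite linZ // linB //.
case: (fred_cases i k) => ->; first by rewrite subrr scaler0.
by rewrite red_idem // subrr scaler0.
Qed.

Lemma reduce_kill i g : (i < size F)%N -> ~ in_lt_syz F i g ->
  reduce_op F i (<< g >> - T_ i << g >>) = 0.
Proof.
move=> lt ns; have RR := reduce_red lt.
have E : reduce_op F i << g >> = T_ i << g >> by rewrite reduce_opE lin_ext_U fred_nsyz.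
by rewrite (linB (red_lin RR)) -E (red_idem RR) subrr.
Qed.


Lemma allred_S : allred (reduction F).
Proof. by move=> T /In_reduction [i [lt ->]]; exact: reduce_red. Qed.

Lemma syz_sum (L : seq ((nat * G) * K)) :
  (forall x, x \in L -> (x.1.1 < size F)%N) ->
  \sum_(j < size F) syz_comp F L j =
  \sum_(x <- L) x.2 *: (<< x.1.2 >> - T_ x.1.1 << x.1.2 >>).
Proof.
move=> H; rewrite /syz_comp.
under eq_bigr => j _ do rewrite big_mkcond.
rewrite exchange_big /=; apply: eq_big_seq => x xL.
have lt := H x xL.
rewrite (bigD1 (Ordinal lt)) //= eqxx big1 ?addr0 // => j.
by rewrite -val_eqE /= eq_sym => /negbTE ->.
Qed.

Lemma syz_main i g : (i < size F)%N -> red (T_ i) g ->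
  ksum (reduction F) (<< g >> - T_ i << g >>).
Proof.
have AS := allred_S; have KS := ksum_subspace AS.
elim/ltn_ind: i g => i IHi g.
elim/(well_founded_induction wfG): g => g IHg lt rg.
case: (classic (in_lt_syz F i g)) => [[L [uL HL sum0 _ [iL maxL]]]|ns]; last first.
  apply: (ksum_in AS) (reduce_kill lt ns); apply/In_reduction; by exists i.
rewrite syz_sum in sum0; last by move=> x /HL [].
have [x0 x0L Ex0] : exists2 x0, x0 \in L & x0.1 = (i, g).
  by move/mapP: iL => [x0 ? ->]; exists x0.
rewrite (big_rem x0) //= in sum0.
have U : uniq (map fst (x0 :: rem x0 L)).
  by rewrite (perm_uniq (perm_map fst (perm_to_rem x0L))) in uL.
move: U => /= /andP [nx _].
have Hrest : ksum (reduction F) (\sum_(y <- rem x0 L) y.2 *: (<< y.1.2 >> - T_ y.1.1 << y.1.2 >>)).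
  rewrite big_seq; apply: (sub_sum KS) => y yR; apply: (subZ KS).
  have yL : y \in L := mem_rem yR.
  have ny : y.1 != x0.1 by apply: contraNneq nx => <-; apply: map_f.
  have [lty ry _] := HL y yL.
  case: (maxL y.1 (map_f fst yL)) => [lt1|[E1 E2]].
    exact: IHi.
  rewrite /= in E1 E2.
  have yg : (y.1.2 < g)%O.
    rewrite lt_neqAle E2 andbT; apply: contra ny => /eqP E3.
    by rewrite Ex0; case: (y.1) E1 E3 => a b /= -> ->.
  by rewrite E1; apply: IHg => //; rewrite -E1.
have [_ _ cn] := HL x0 x0L.
rewrite Ex0 /= in sum0.
have -> : << g >> - T_ i << g >> =
   x0.2^-1 *: - \sum_(y <- rem x0 L) y.2 *: (<< y.1.2 >> - T_ y.1.1 << y.1.2 >>).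
  have E : x0.2 *: (<< g >> - T_ i << g >>) =
      - \sum_(y <- rem x0 L) y.2 *: (<< y.1.2 >> - T_ y.1.1 << y.1.2 >>).
    by apply/eqP; rewrite -addr_eq0 sum0.
  by rewrite -E scalerA mulVf // scale1r.
by apply: (subZ KS); apply: (subN KS).
Qed.

Lemma ker_in_S i w : (i < size F)%N -> T_ i w = 0 -> ksum (reduction F) w.
Proof.
move=> lt Tw; have TR := TiR lt; have TL := red_lin TR.
have KS := ksum_subspace allred_S.
have -> : w = \sum_(k <- msupp w) w@_k *: (<< k >> - T_ i << k >>).
  transitivity (w - T_ i w); first by rewrite Tw subr0.
  rewrite {1 2}(malg_decomp w) (lin_sum TL) -sumrB.
  by apply: eq_bigr => k _; rewrite (linZ TL) scalerBr.
apply: (sub_sum KS) => k _; apply: (subZ KS).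
have [nk|rk] := pbP (nf (T_ i) k).
  by rewrite nk subrr; exact: sub0 KS.
exact: syz_main.
Qed.

End Reduction.

End Work.

Theorem mainTheorem8 (K : fieldType) (d : Order.disp_t) (G : orderType d)
  (wfG : well_founded (fun x y : G => (x < y)%O))
  (F : seq ({malg K[G]} -> {malg K[G]}))
  (HF : forall T, List.In T F -> is_red_op T) :
  is_completion F (F ++ inc_completion (reduction F)).
Proof.
have AF : allred F := HF.
have AS := allred_S HF.
have W_SF : forall v, ksum (reduction F) v -> ksum F v.
  apply: ksum_sub; first exact: ksum_subspace.
  move=> T /In_reduction [i [lt ->]] w /(reduce_ker HF lt) Tw.
  exact: ksum_in AF (nth_In' lt) Tw.
have W_FS : forall v, ksum F v -> ksum (reduction F) v.
  apply: ksum_sub; first exact: ksum_subspace.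
  move=> T /In_nth' [i [lt ->]] w Tw. exact: (ker_in_S wfG AF lt Tw).
have [AC KC CC] : [/\ allred (inc_completion (reduction F)),
   (forall C, List.In C (inc_completion (reduction F)) -> forall w, C w = 0 -> ksum (reduction F) w) &
   (forall g, nfF (reduction F ++ inc_completion (reduction F)) g -> ~ LT (ksum (reduction F)) g)].
  move: AS; rewrite /inc_completion; case: (reduction F) => [|S1 S'] AS /=.
    split=> // g _ [v [v0 [gs _]]]; by move: gs; rewrite v0 msupp0'.
  have A1 : allred [:: S1] by move=> T [<-|//]; apply: AS; left.
  have A' : allred S' by move=> T H; apply: AS; right.
  have C1 : conf [:: S1].
    move=> g n1 [v [Pv lv]].
    have S1R : is_red_op S1 by apply: AS; left.
    have Tv : S1 v = 0.
      apply: (ksum_sub (kernel_subspace (red_lin S1R))) Pv.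
      by move=> T [<-|//].
    by apply: (nf_notlt S1R (n1 S1 (or_introl erefl)) Tv lv).
  exact: (inc_main wfG A1 A' C1).
set C := inc_completion (reduction F) in AC KC CC *.
have AFC : allred (F ++ C) by move=> T /List.in_app_iff [/AF|/AC].
have Eks : ksum (F ++ C) = ksum F.
  apply: functional_extensionality => v; apply: propositional_extensionality; split.
  - apply: ksum_sub; first exact: ksum_subspace.
    move=> T /List.in_app_iff [HT|HT] w Tw; first exact: ksum_in AF HT Tw.
    exact/W_SF/(KC T HT w Tw).
  - by apply: ksum_mono => // T HT; apply List.in_or_app; left.
have Ew : wedge (F ++ C) = wedge F by rewrite /wedge Eks.
split.
- move=> g [nFC nW]; apply: nW; rewrite Ew.
  have [WR WK] := wedgeP wfG AF.
  apply: (nf_of_notLT WR WK) => /(LT_mono W_FS); apply: CC.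
  move=> T /List.in_app_iff [/In_reduction [i [lt ->]]|HT].
    apply: reduce_nf; apply: nFC; apply List.in_or_app; left; exact: nth_In'.
  by apply: nFC; apply List.in_or_app; right.
- by move=> T H; apply List.in_or_app; left.
- exact: Ew.
Qed.
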